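(* Let $L$ be a finite-dimensional Lie algebra over a field $F$ and let $M$ be a maximal subalgebra of $L$. Then the number $\dim(C/k(C))$, where $C$ is an ideal completion of $M$ in $L$, does not depend on the choice of the ideal completion $C$; that is, the ideal index $\eta(L:M)$ is well-defined.
   Context: For a nonzero subalgebra $B$ of $L$, the strict core $k(B)$ is the sum of all ideals of $L$ that are proper subalgebras of $B$ (it is $0$ if there are none). A subalgebra $C$ of $L$ is a completion of $M$ if $C\not\subseteq M$ but every proper subalgebra of $C$ that is an ideal of $L$ is contained in $M$. An ideal completion of $M$ is a completion of $M$ which is an ideal of $L$ (such exist for every maximal subalgebra). The ideal index $\eta(L:M)$ is defined as $\dim(C/k(C))$ for an ideal completion $C$ of $M$. *)

(* Defs.v *)
From HB Require Import structures.
From mathcomp Require Import all_boot all_order all_algebra.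
From Stdlib Require Import ClassicalEpsilon.
Set Implicit Arguments. Unset Strict Implicit. Unset Printing Implicit Defensive.
Import GRing.Theory.
Local Open Scope ring_scope.

Section Lie.
Variables (F : fieldType) (L : vectType F).

Definition is_lie_bracket (br : L -> L -> L) : Prop :=
  [/\ (forall y, linear (fun x => br x y)),
      (forall x, linear (br x)),
      (forall x, br x x = 0) &
      (forall x y z, br x (br y z) + br y (br z x) + br z (br x y) = 0)].

Variable br : L -> L -> L.

Definition is_subalgebra (U : {vspace L}) : Prop :=
  forall x y, x \in U -> y \in U -> br x y \in U.

Definition is_ideal (I : {vspace L}) : Prop :=
  forall x y, y \in I -> br x y \in I.

Definition is_maximal_subalgebra (M : {vspace L}) : Prop :=
  [/\ is_subalgebra M, M != fullv &
      forall U : {vspace L}, is_subalgebra U -> (M <= U)%VS -> U = M \/ U = fullv].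

(* K is the sum of all ideals of L that are proper subalgebras of B,
   i.e. the least subspace containing all of them (0 if there are none). *)
Definition is_strict_core (B K : {vspace L}) : Prop :=
  (forall I : {vspace L}, is_ideal I -> ((I <= B)%VS && (I != B)) -> (I <= K)%VS) /\
  (forall U : {vspace L},
     (forall I : {vspace L}, is_ideal I -> ((I <= B)%VS && (I != B)) -> (I <= U)%VS) ->
     (K <= U)%VS).

(* the strict core k(B) (this sum always exists; chosen classically) *)
Definition strict_core (B : {vspace L}) : {vspace L} :=
  epsilon (inhabits 0%VS) (is_strict_core B).

Definition is_completion (M C : {vspace L}) : Prop :=
  [/\ is_subalgebra C, ~ (C <= M)%VS &
      forall I : {vspace L}, is_subalgebra I -> is_ideal I -> ((I <= C)%VS && (I != C)) -> (I <= M)%VS].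

Definition is_ideal_completion (M C : {vspace L}) : Prop :=
  is_completion M C /\ is_ideal C.

(* dim (C / k(C)), with k(C) <= C *)
Definition ideal_index_of (C : {vspace L}) : nat :=
  (\dim C - \dim (strict_core C))%N.

End Lie.

(* Main.v *)
Require Import Defs.
From mathcomp Require Import all_boot all_order all_algebra.
From Stdlib Require Import Classical ClassicalEpsilon.
From mathcomp Require Import zify.
Set Implicit Arguments. Unset Strict Implicit. Unset Printing Implicit Defensive.
Import GRing.Theory.
Local Open Scope ring_scope.

Lemma lub_exists (F : fieldType) (L : vectType F) (P : {vspace L} -> Prop) :
  exists K : {vspace L}, (forall I, P I -> (I <= K)%VS) /\
    (forall U : {vspace L}, (forall I, P I -> (I <= U)%VS) -> (K <= U)%VS).
Proof.
suff H : forall n (U : {vspace L}), (\dim U <= n)%N -> (forall I, P I -> (I <= U)%VS) ->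
  exists K : {vspace L}, (forall I, P I -> (I <= K)%VS) /\
    (forall U : {vspace L}, (forall I, P I -> (I <= U)%VS) -> (K <= U)%VS).
  by apply: (H _ fullv (leqnn _)) => I _; exact: subvf.
elim=> [|n IH] U hU ub.
  exists U; split=> [//|V _].
  have /eqP -> : U == 0%VS by rewrite -dimv_eq0 -leqn0.
  exact: sub0v.
case: (classic (forall V : {vspace L}, (forall I, P I -> (I <= V)%VS) -> (U <= V)%VS)) => [h|].
  by exists U.
move=> hn; have [V hV] := not_all_ex_not _ _ hn; have [ubV nUV] := imply_to_and _ _ hV.
apply: (IH (U :&: V)%VS).
  have le : (U :&: V <= U)%VS by exact: capvSl.
  have := dimv_leqif_eq le; case => h1 h2.
  have hne : (U :&: V)%VS != U.
    apply/negP => /eqP e; apply: nUV; rewrite -e; exact: capvSr.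
  rewrite -ltnS; apply: leq_trans hU; rewrite ltn_neqAle h1 andbT.
  by rewrite h2.
by move=> I PI; rewrite subv_cap ub // ubV.
Qed.

Lemma strict_coreP (F : fieldType) (L : vectType F) (br : L -> L -> L) (B : {vspace L}) :
  is_strict_core br B (strict_core br B).
Proof.
rewrite /strict_core; apply: epsilon_spec.
have [K HK] := lub_exists (fun I => is_ideal br I /\ ((I <= B)%VS && (I != B))).
exists K; split => [I hI hB|U hU]; first exact: (proj1 HK).
apply: (proj2 HK) => I [? ?]; exact: hU.
Qed.

Lemma br_addl (F : fieldType) (L : vectType F) (br : L -> L -> L) :
  is_lie_bracket br -> forall x y z, br (x + y) z = br x z + br y z.
Proof. by case=> h1 _ _ _ x y z; have := h1 z 1 x y; rewrite !scale1r. Qed.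

Lemma br_addr (F : fieldType) (L : vectType F) (br : L -> L -> L) :
  is_lie_bracket br -> forall x y z, br z (x + y) = br z x + br z y.
Proof. by case=> _ h1 _ _ x y z; have := h1 z 1 x y; rewrite !scale1r. Qed.

Lemma br_anti (F : fieldType) (L : vectType F) (br : L -> L -> L) :
  is_lie_bracket br -> forall x y, br x y = - br y x.
Proof.
move=> Hbr x y; have := Hbr => -[_ _ h0 _].
have := h0 (x + y); rewrite (br_addl Hbr) !(br_addr Hbr) !h0 add0r addr0.
by move/eqP; rewrite addr_eq0 => /eqP.
Qed.

Lemma ideal_right (F : fieldType) (L : vectType F) (br : L -> L -> L) (I : {vspace L}) :
  is_lie_bracket br -> is_ideal br I -> forall x y, x \in I -> br x y \in I.
Proof. by move=> Hbr hI x y hx; rewrite (br_anti Hbr) rpredN hI. Qed.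

Lemma ideal_sum_full (F : fieldType) (L : vectType F) (br : L -> L -> L)
  (Hbr : is_lie_bracket br) (M C : {vspace L}) :
  is_maximal_subalgebra br M -> is_ideal br C -> ~ (C <= M)%VS -> (C + M)%VS = fullv.
Proof.
move=> [sM _ mM] iC nCM.
have /subvP sCl := addvSl C M; have /subvP sMr := addvSr C M.
have sCM : is_subalgebra br (C + M)%VS.
  move=> x y /memv_addP [c hc [m hm ->]] /memv_addP [c' hc' [m' hm' ->]].
  rewrite (br_addl Hbr) !(br_addr Hbr) addrA; apply: rpredD; first apply: rpredD.
  - apply: rpredD; apply: sCl; first exact: ideal_right.
    exact: ideal_right.
  - by apply: sCl; apply: iC.
  - by apply: sMr; apply: sM.
have [e|//] := mM (C + M)%VS sCM (addvSr _ _).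
by exfalso; apply: nCM; rewrite -e addvSl.
Qed.

Lemma index_distinct (F : fieldType) (L : vectType F) (br : L -> L -> L)
  (Hbr : is_lie_bracket br) (M : {vspace L})
  (HM : is_maximal_subalgebra br M) (C1 C2 : {vspace L}) :
  is_ideal_completion br M C1 -> is_ideal_completion br M C2 -> C1 != C2 ->
  ideal_index_of br C1 = (\dim (fullv : {vspace L}) - \dim M)%N.
Proof.
move=> [[s1 n1 c1] i1] [[s2 n2 c2] i2] ne.
have full1 := ideal_sum_full Hbr HM i1 n1.
have full2 := ideal_sum_full Hbr HM i2 n2.
have iP : is_ideal br (C1 :&: C2)%VS.
  by move=> x y /memv_capP [h1 h2]; rewrite memv_cap i1 // i2.
have P_M : (C1 :&: C2 <= M)%VS.
  apply: (c1 (C1 :&: C2)%VS); [by move=> x y _ hy; exact: iP | exact: iP |].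
  rewrite capvSl /=; apply/negP => /eqP e.
  apply: n1; apply: (c2 C1); [by move=> x y _ hy; exact: i1 | exact: i1 |].
  by rewrite -{1}e capvSr.
have iX : is_ideal br (C1 :&: M)%VS.
  move=> x y /memv_capP [h1 hm].
  have : x \in (C2 + M)%VS by rewrite full2 memvf.
  case/memv_addP => c hc [m hm' ->].
  rewrite (br_addl Hbr); apply: rpredD.
    move/subvP: P_M => sP; rewrite memv_cap i1 //=; apply: sP.
    by rewrite memv_cap i1 // ideal_right.
  by have [sM _ _] := HM; rewrite memv_cap i1 // sM.
have [ub lub] := strict_coreP br C1.
have eK : strict_core br C1 = (C1 :&: M)%VS.
  apply/eqP; rewrite eqEsubv; apply/andP; split.
    apply: lub => I hI /andP [hIC hne]; rewrite subv_cap hIC /=.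
    by apply: c1 => //; [move=> x y _; exact: hI | rewrite hIC].
  apply: ub => //; rewrite capvSl /=; apply/negP => /eqP e; apply: n1.
  by rewrite -e capvSr.
rewrite /ideal_index_of eK.
have := dimv_sum_cap C1 M; rewrite full1 => h.
lia.
Qed.

Theorem corollary2p2 (F : fieldType) (L : vectType F) (br : L -> L -> L)
  (Hbr : is_lie_bracket br) (M : {vspace L})
  (HM : is_maximal_subalgebra br M) (C1 C2 : {vspace L}) :
  is_ideal_completion br M C1 -> is_ideal_completion br M C2 ->
  ideal_index_of br C1 = ideal_index_of br C2.
Proof.
move=> h1 h2; have [->//|ne] := eqVneq C1 C2.
rewrite (index_distinct Hbr HM h1 h2 ne) (index_distinct Hbr HM h2 h1) //.
by rewrite eq_sym.
Qed.
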